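(* Let $(L,\wedge,\vee,0,1)$ be a bounded lattice with multiplicative Nakano mosaic $(L,\boxdot,1)$, where $x\boxdot y:=\{z\in L\mid x\wedge y=x\wedge z=z\wedge y\}$. For $x,y,z\in L$, we have $z=x\wedge y$ if and only if $x,y\in z\boxdot z$ and $z\in x\boxdot y$. *)

(* Defs.v *)
From HB Require Import structures.
From mathcomp Require Import all_boot all_order.
Set Implicit Arguments. Unset Strict Implicit. Unset Printing Implicit Defensive.
Import Order.TTheory.
Local Open Scope order_scope.

Definition nakano_mul (d : Order.disp_t) (L : latticeType d) (x y : L) : pred L :=
  fun z => (x `&` y == x `&` z) && (x `&` z == z `&` y).

(* Main.v *)
Require Import Defs.
From HB Require Import structures.
From mathcomp Require Import all_boot all_order.
Local Open Scope order_scope.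
Import Order.TTheory.

Theorem mainTheorem18 (d : Order.disp_t) (L : tbLatticeType d) (x y z : L) :
  z = x `&` y <->
  [/\ x \in nakano_mul z z, y \in nakano_mul z z & z \in nakano_mul x y].
Proof.
rewrite !unfold_in /nakano_mul /= meetxx.
split.
  move=> ->.
  have e1 : x `&` y `&` x = x `&` y by apply/meet_l/leIl.
  have e2 : x `&` y `&` y = x `&` y by apply/meet_l/leIr.
  rewrite e1 e2 (meetC x (x `&` y)) (meetC y (x `&` y)) e1 e2 eqxx.
  by split.
case=> /andP[/eqP h1 _] /andP[/eqP h2 _] /andP[/eqP h3 _].
by rewrite h3 meetC -h1.
Qed.
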